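(* Let $T=\{\!\{T_1,\dots,T_m\}\!\}$ where each $T_j$ is a $G_j$-join tree with $G_j$ a finite subgraph of $\mathsf{Path}_{\mathbb Z}$. Then for every $j\in[m]$, \[\Psi(T)\ge\Psi(T_j)+\vec\Delta(G_1,\dots,G_m\mid G_j).\]
   Context: Graphs are finite simple graphs without isolated vertices; $\emptyset$ is the empty graph. $\mathsf{Path}_{\mathbb Z}$ has vertex set $\mathbb Z$ and edges $\{i-1,i\}$. $\Delta(G)$ = number of connected components; $G\ominus F$ = union of components of $G$ sharing no vertex with $F$; $\vec\Delta(H_1,\dots,H_r\mid F)=\sum_{l=1}^r\Delta(H_l\ominus(F\cup H_1\cup\dots\cup H_{l-1}))$, $\vec\Delta(H_1,\dots,H_r)=\vec\Delta(H_1,\dots,H_r\mid\emptyset)$. Join trees: for finite $G\subset\mathsf{Path}_{\mathbb Z}$, a $G$-join tree is a finite rooted binary tree (each non-leaf has an ordered left and right child) with nodes labeled by subgraphs of $G$: leaves by single-edge subgraphs of $G$ or $\emptyset$, each non-leaf by the union of its children's labels, the root by $G$. $T_1\cup T_2$ is the join tree with a new root whose left subtree is $T_1$ and right subtree $T_2$. $\{\!\{T_1\}\!\}=T_1$ and $\{\!\{T_1,\dots,T_m\}\!\}=\{\!\{T_1,\dots,T_{m-1}\}\!\}\cup\{\!\{T_1,\dots,T_{m-2},T_m\}\!\}$ for $m\ge2$. For a $G$-join tree $S$ and a root-to-leaf path $b_1,\dots,b_\ell$, let $B_j$ ($j<\ell$) be the label of the child of $b_j$ other than $b_{j+1}$ and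 $B_\ell$ the label of leaf $b_\ell$; $\{B_1,\dots,B_\ell\}$ is an $S$-branch covering. $\Psi(S)$ is the maximum of $\vec\Delta(C_1,\dots,C_r)$ over all $S$-branch coverings $\mathcal C$ and all enumerations $C_1,\dots,C_r$ (without repetition) of $\mathcal C$. *)

(* Defs.v *)
From mathcomp Require Import all_boot all_order all_algebra.
From mathcomp Require Import finmap.
Set Implicit Arguments. Unset Strict Implicit. Unset Printing Implicit Defensive.
Import Order.TTheory GRing.Theory Num.Theory.
Local Open Scope fset_scope.

(* A finite subgraph of Path_Z (without isolated vertices) is determined by its
   edge set.  The edge {i-1, i} of Path_Z is encoded by the integer i. *)
Definition graph := {fset int}.

Definition verts (G : graph) : {fset int} := G `|` [fset (e - 1)%R | e in G].

(* In Path_Z, edges e and f of G lie in the same connected component of G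
   iff every edge between them (inclusive) belongs to G. *)
Definition linked (G : graph) (e f : int) : bool :=
  all (fun n : nat => (Num.min e f + n%:Z)%R \in G) (iota 0 (absz (f - e)%R).+1).

Definition comp (G : graph) (e : int) : graph := [fset f in G | linked G e f].

Definition ncomp (G : graph) : nat := #|` [fset comp G e | e in G] |.

Definition gsep (G F : graph) : graph :=
  [fset e in G | verts (comp G e) `&` verts F == fset0].

Fixpoint vdelta (F : graph) (Hs : seq graph) : nat :=
  match Hs with
  | [::] => 0
  | H :: Hs' => ncomp (gsep H F) + vdelta (F `|` H) Hs'
  end.

(* Join trees: binary trees whose leaves carry a single edge (Some i) or the
   empty graph (None); the label of an inner node is the union of its
   children's labels, so labels are computed by [jlabel].  A G-join tree is a
   tree S with jlabel S = G. *)
Inductive jtree : Type :=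
  | JLeaf of option int
  | JNode of jtree & jtree.

Fixpoint jlabel (S : jtree) : graph :=
  match S with
  | JLeaf None => fset0
  | JLeaf (Some i) => [fset i]
  | JNode l r => jlabel l `|` jlabel r
  end.

(* bigjoin n f = {{ f 0, ..., f (n-1) }}  (n >= 1) *)
Fixpoint bigjoin (n : nat) (f : nat -> jtree) : jtree :=
  match n with
  | 0 => JLeaf None
  | 1 => f 0
  | (n'.+1 as k).+1 =>
      JNode (bigjoin k f) (bigjoin k (fun i => if i == n' then f k else f i))
  end.

(* All S-branch coverings, each as the list B_1, ..., B_l along a
   root-to-leaf path. *)
Fixpoint branch_coverings (S : jtree) : seq (seq graph) :=
  match S with
  | JLeaf _ => [:: [:: jlabel S]]
  | JNode l r =>
      [seq jlabel r :: c | c <- branch_coverings l] ++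
      [seq jlabel l :: c | c <- branch_coverings r]
  end.

(* Psi(S): max of vecDelta(C_1,...,C_r) over all coverings and all
   enumerations without repetition of the covering (as a set). *)
Definition Psi (S : jtree) : nat :=
  \max_(c <- branch_coverings S)
     \max_(s <- permutations (undup c)) vdelta fset0 s.

(* Main.v *)
Require Import Defs.
From mathcomp Require Import all_boot all_order all_algebra.
From mathcomp Require Import finmap zify.
Set Implicit Arguments. Unset Strict Implicit. Unset Printing Implicit Defensive.
Import Order.TTheory GRing.Theory Num.Theory.
Local Open Scope fset_scope.

Lemma in_verts (G : graph) (v : int) : (v \in verts G) = (v \in G) || ((v + 1)%R \in G).
Proof.
rewrite /verts in_fsetU; congr (_ || _); apply/imfsetP/idP => /=.
  by case=> x xG ->; rewrite subrK.
by move=> h; exists (v + 1)%R => //; rewrite addrK.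
Qed.

Lemma linkedP (G : graph) e f :
  reflect (forall g, (Num.min e f <= g)%R -> (g <= Num.max e f)%R -> g \in G) (linked G e f).
Proof.
apply: (iffP allP) => H.
  move=> g h1 h2.
  have e1 : (Num.min e f + `|g - Num.min e f|%N%:Z)%R = g by lia.
  rewrite -e1; apply: H; rewrite mem_iota; lia.
move=> n; rewrite mem_iota => hn; apply: H; lia.
Qed.

Lemma linked_refl (G : graph) (e : int) : e \in G -> linked G e e.
Proof. by move=> h; apply/linkedP => g h1 h2; have -> : g = e by lia. Qed.

Lemma linked_sub (G H : graph) (e f : int) : G `<=` H -> linked G e f -> linked H e f.
Proof. by move=> /fsubsetP s /linkedP L; apply/linkedP => g h1 h2; apply/s/L. Qed.

Lemma in_comp (G : graph) (e f : int) : (f \in Defs.comp G e) = (f \in G) && linked G e f.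
Proof. by rewrite /Defs.comp !inE. Qed.

Lemma in_gsep (G F : graph) (e : int) :
  (e \in gsep G F) = (e \in G) && [disjoint verts (Defs.comp G e) & verts F]%fset.
Proof. by rewrite /gsep !inE fsetI_eq0. Qed.

Lemma verts_sub (A B : graph) : A `<=` B -> verts A `<=` verts B.
Proof.
move=> /fsubsetP s; apply/fsubsetP => v; rewrite !in_verts.
by case/orP => [/s -> // | /s ->]; rewrite orbT.
Qed.

Lemma gsep_sub (H F : graph) : H `<=` F -> gsep H F = fset0.
Proof.
move=> /fsubsetP s; apply/fsetP => x; rewrite in_gsep inE.
apply/negP => /andP [xH /fdisjointP D].
have : x \in verts (Defs.comp H x) by rewrite in_verts in_comp xH linked_refl.
by move/D; rewrite in_verts s.
Qed.

Lemma ncomp0 : ncomp fset0 = 0.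
Proof. by rewrite /ncomp imfset0 cardfs0. Qed.

Lemma linked_sepU (X Y F : graph) (e f : int) :
  X `<=` F -> e \in Y -> [disjoint verts (Defs.comp Y e) & verts F]%fset ->
  linked (X `|` Y) e f -> linked Y e f.
Proof.
move=> /fsubsetP XF eY /fdisjointP D /linkedP L.
have nb : forall g g', g' \in Defs.comp Y e -> (g = g' + 1 \/ g = g' - 1)%R -> g \notin F.
  move=> g g' gc [->|->]; apply/negP => gF.
    have : g' \in verts (Defs.comp Y e) by rewrite in_verts gc.
    by move/D; rewrite in_verts gF orbT.
  have : (g' - 1)%R \in verts (Defs.comp Y e) by rewrite in_verts subrK gc orbT.
  by move/D; rewrite in_verts gF.
suff K : forall d g, (Num.min e f <= g)%R -> (g <= Num.max e f)%R ->
    (`|g - e|%N <= d)%N -> g \in Y.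
  by apply/linkedP => g h1 h2; apply: (K `|g - e|%N).
elim=> [|d IH] g h1 h2 hd.
  by have -> : g = e by lia.
case: (leqP `|g - e|%N d) => hd'; first exact: IH.
set g' := if (e < g)%R then (g - 1)%R else (g + 1)%R.
have g'Y : g' \in Y by apply: IH; rewrite /g'; case: ifP => c; lia.
have g'c : g' \in Defs.comp Y e.
  rewrite in_comp g'Y; apply/linkedP => h k1 k2; apply: IH; rewrite /g' in k1 k2 *;
  case: ifP k1 k2 => c k1 k2; lia.
have gnF : g \notin F.
  by apply: (nb g g' g'c); rewrite /g'; case: ifP => c; [left|right]; lia.
have := L g h1 h2; rewrite in_fsetU; case/orP => // /XF gF.
by rewrite gF in gnF.
Qed.

Lemma gsepU (X Y F : graph) : X `<=` F -> gsep (X `|` Y) F = gsep Y F.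
Proof.
move=> XF; apply/fsetP => x; rewrite !in_gsep in_fsetU.
apply/idP/idP.
  case/andP => /orP [xX|xY] /fdisjointP D.
    have : x \in verts (Defs.comp (X `|` Y) x).
      by rewrite in_verts in_comp in_fsetU xX linked_refl // in_fsetU xX.
    by move/D; rewrite in_verts (fsubsetP XF _ xX).
  rewrite xY /=; apply/fdisjointP => v vc; apply: D; move: v vc; apply/fsubsetP.
  apply: verts_sub; apply/fsubsetP => f; rewrite !in_comp in_fsetU => /andP [->].
  by rewrite orbT /=; apply: linked_sub; rewrite fsubsetUr.
case/andP => xY D; rewrite xY orbT /=.
move/fdisjointP: (D) => D'.
apply/fdisjointP => v vc; apply: D'; move: v vc; apply/fsubsetP.
apply: verts_sub; apply/fsubsetP => f; rewrite !in_comp => /andP [_ Lk].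
have Lk' := linked_sepU XF xY D Lk.
rewrite Lk' andbT; move/linkedP: Lk' => Lk'; apply: Lk'; lia.
Qed.

Fixpoint unions (s : seq graph) : graph :=
  if s is H :: s' then H `|` unions s' else fset0.

Lemma in_unions (s : seq graph) x : (x \in unions s) = has (fun H : graph => x \in H) s.
Proof. by elim: s => [|H s IH] //=; rewrite in_fsetU IH. Qed.

Lemma unions_eq (s t : seq graph) : s =i t -> unions s = unions t.
Proof. by move=> e; apply/fsetP => x; rewrite !in_unions (eq_has_r e). Qed.

Lemma unions_cat (s t : seq graph) : unions (s ++ t) = unions s `|` unions t.
Proof. by elim: s => [|H s IH] /=; rewrite ?fset0U // IH fsetUA. Qed.

Lemma vdelta_cat F (s t : seq graph) :
  vdelta F (s ++ t) = (vdelta F s + vdelta (F `|` unions s) t)%N.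
Proof.
elim: s F => [|H s IH] F /=; first by rewrite fsetU0.
by rewrite IH addnA fsetUA.
Qed.

Lemma unions_bc S c : c \in branch_coverings S -> unions c = jlabel S.
Proof.
elim: S c => [o|l IHl r IHr] c /=.
  by rewrite inE => /eqP -> /=; rewrite fsetU0.
rewrite mem_cat => /orP [] /mapP [c' c'in ->] /=.
  by rewrite (IHl _ c'in) fsetUC.
by rewrite (IHr _ c'in).
Qed.

Lemma bc_nonempty S : branch_coverings S != [::].
Proof.
elim: S => [o|l IHl r IHr] //=.
by case: (branch_coverings l) IHl.
Qed.

Definition Lf (f : nat -> jtree) i := jlabel (f i).
Arguments Lf : simpl never.

Definition sh (f : nat -> jtree) n' := fun i => if i == n' then f n'.+1 else f i.

Lemma map_sh f n' : [seq Lf (sh f n') i | i <- iota 0 n'] = [seq Lf f i | i <- iota 0 n'].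
Proof.
apply/eq_in_map => i; rewrite mem_iota /Lf /sh => /andP [_ h].
by rewrite ifF //; apply/negbTE; rewrite neq_ltn h.
Qed.

Lemma iotaS0 k : iota 0 k.+1 = iota 0 k ++ [:: k].
Proof. by rewrite -addn1 iotaD. Qed.

Lemma jlabel_bigjoin k f :
  jlabel (bigjoin k.+1 f) = unions [seq Lf f i | i <- iota 0 k.+1].
Proof.
elim: k f => [|k IH] f; first by rewrite /= fsetU0.
rewrite [bigjoin _ _]/= [jlabel (JNode _ _)]/=.
rewrite IH (IH (fun i => if i == k then f k.+1 else f i)).
rewrite -/(sh f k) (iotaS0 k.+1) (iotaS0 k) !map_cat map_sh !unions_cat /=.
rewrite /Lf /sh eqxx.
apply/fsetP => x; rewrite !in_fsetU !inE.
by case: (x \in unions _); case: (x \in jlabel (f k)); case: (x \in jlabel (f k.+1)).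
Qed.

Lemma bigjoinSS k f : bigjoin k.+2 f = JNode (bigjoin k.+1 f) (bigjoin k.+1 (sh f k)).
Proof. by []. Qed.

Arguments bigjoin : simpl never.

Lemma gsep0 F : ncomp (gsep fset0 F) = 0.
Proof. by rewrite gsep_sub ?ncomp0 // fsub0set. Qed.

Lemma Q n f j : (j < n.+1)%N ->
  forall c s, c \in branch_coverings (f j) -> s =i c ->
  exists c' s', [/\ c' \in branch_coverings (bigjoin n.+1 f), s' =i c' &
    vdelta fset0 s' = (vdelta fset0 s + vdelta (Lf f j) [seq Lf f i | i <- iota 0 n.+1])%N].
Proof.
elim: n f j => [|n IH] f j.
  rewrite ltnS leqn0 => /eqP -> c s cin sc; exists c, s; split => //=.
  by rewrite gsep_sub ?ncomp0 ?addn0 // fsubset_refl.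
move=> hj c s cin sc.
have Sx : forall (k : nat) g, (k <= n.+1)%N ->
    unions [seq Lf g i | i <- iota 0 k] `<=` unions [seq Lf g i | i <- iota 0 n.+1].
  move=> k g hk; apply/fsubsetP => x; rewrite !in_unions.
  case/seq.hasP => H /mapP [i]; rewrite mem_iota => /andP [_ ik] -> xH.
  apply/seq.hasP; exists (Lf g i) => //; apply/map_f; rewrite mem_iota; lia.
have R1 := jlabel_bigjoin n (sh f n).
have eLn : Lf (sh f n) n = Lf f n.+1 by rewrite /Lf /sh eqxx.
rewrite iotaS0 map_cat map_sh unions_cat /= eLn in R1.
have R2 := jlabel_bigjoin n f.
rewrite bigjoinSS.
case: (ltnP j n.+1) => hjn.
  have [c0 [s0 [c0in s0c0 E]]] := IH f j hjn c s cin sc.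
  exists (jlabel (bigjoin n.+1 (sh f n)) :: c0), (s0 ++ [:: jlabel (bigjoin n.+1 (sh f n))]).
  split.
  - by rewrite mem_cat; apply/orP; left; apply/map_f.
  - by move=> x; rewrite mem_cat !inE orbC (s0c0 x).
  rewrite vdelta_cat E (iotaS0 n.+1) map_cat vdelta_cat -addnA; congr (_ + _)%N.
  rewrite /= !addn0 (unions_eq s0c0) (unions_bc c0in) R1 R2 gsepU; last first.
    by rewrite fset0U; apply: Sx.
  rewrite fsetU0 fset0U; congr (_ + ncomp (gsep _ _))%N.
  have -> : (Lf f 0 `|` unions [seq Lf f i | i <- iota 1 n]) = unions [seq Lf f i | i <- iota 0 n.+1] by [].
  apply/esym/fsetUidPr; apply/fsubsetP => x xj; rewrite in_unions; apply/seq.hasP.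
  by exists (Lf f j) => //; apply/map_f; rewrite mem_iota.
have ej : j = n.+1 by lia.
subst j.
have cin' : c \in branch_coverings (sh f n n) by rewrite /sh eqxx.
have [c0 [s0 [c0in s0c0 E]]] := IH (sh f n) n (ltnSn n) c s cin' sc.
exists (jlabel (bigjoin n.+1 f) :: c0), (s0 ++ [:: jlabel (bigjoin n.+1 f)]).
split.
- by rewrite mem_cat; apply/orP; right; apply/map_f.
- by move=> x; rewrite mem_cat !inE orbC (s0c0 x).
rewrite vdelta_cat E -addnA; congr (_ + _)%N.
rewrite (iotaS0 n) map_cat map_sh vdelta_cat eLn.
rewrite (iotaS0 n.+1) (iotaS0 n) -catA map_cat vdelta_cat /= !addn0.
rewrite eLn (gsep_sub (H := Lf f n.+1)) ?fsubsetUl // ncomp0 addn0.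
rewrite (gsep_sub (H := Lf f n.+1)); last by rewrite -fsetUA fsubsetUl.
rewrite ncomp0 addn0; congr (_ + _)%N.
rewrite (unions_eq s0c0) (unions_bc c0in) R1 R2 (iotaS0 n) map_cat unions_cat /=.
rewrite gsepU; last by rewrite fset0U fsubsetUl.
by rewrite !fsetU0 fset0U fsetUC.
Qed.

Fixpoint kfa (seen s : seq graph) : seq graph :=
  if s is x :: s' then
    if x \in seen then kfa seen s' else x :: kfa (x :: seen) s'
  else [::].

Lemma kfa_vdelta s : forall F seen, (forall H, H \in seen -> H `<=` F) ->
  vdelta F s = vdelta F (kfa seen s).
Proof.
elim: s => [|x s IH] F seen hs //=.
case: ifP => xs /=.
  have xF := hs x xs.
  rewrite gsep_sub // ncomp0 add0n (fsetUidPl _ _ xF); exact: IH.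
congr (_ + _)%N; apply: IH => H; rewrite inE => /orP [/eqP ->|/hs HF].
  exact: fsubsetUr.
by apply: fsubset_trans HF (fsubsetUl _ _).
Qed.

Lemma kfa_mem s : forall seen x, (x \in kfa seen s) = (x \in s) && (x \notin seen).
Proof.
elim: s => [|y s IH] seen x //=.
case: ifP => ys; rewrite ?in_cons IH ?in_cons;
  case: (eqVneq x y) => [->|ne] /=; rewrite ?ys ?andbF ?andbT //.
Qed.

Lemma kfa_uniq s : forall seen, uniq (kfa seen s).
Proof.
elim: s => [|y s IH] seen //=.
case: ifP => ys //=; rewrite IH kfa_mem inE eqxx /=; by rewrite andbF.
Qed.

Lemma Psi_ge S c s : c \in branch_coverings S -> s =i c -> (vdelta fset0 s <= Psi S)%N.
Proof.
move=> cin sc.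
rewrite (@kfa_vdelta s fset0 [::]) //.
have tin : kfa [::] s \in permutations (undup c).
  rewrite mem_permutations; apply: uniq_perm; rewrite ?kfa_uniq ?undup_uniq //.
  by move=> x; rewrite kfa_mem andbT mem_undup sc.
rewrite /Psi; apply: (bigmaxn_sup_seq c) => //.
exact: (bigmaxn_sup_seq (kfa [::] s)).
Qed.

Lemma bigmax_att (T : eqType) (r : seq T) (F : T -> nat) : r != [::] ->
  exists2 x, x \in r & \max_(i <- r) F i = F x.
Proof.
elim: r => [|y r IH] // _; rewrite big_cons.
case: (eqVneq r [::]) => [->|rn].
  by exists y; rewrite ?inE // big_nil maxn0.
have [x xr ->] := IH rn.
case: (leqP (F x) (F y)) => h.
  by exists y; rewrite ?inE ?eqxx //; apply/maxn_idPl.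
by exists x; rewrite ?inE ?xr ?orbT //; apply/maxn_idPr/ltnW.
Qed.

Lemma Psi_att S : exists c s, [/\ c \in branch_coverings S, s =i c & Psi S = vdelta fset0 s].
Proof.
rewrite /Psi.
have [c cin ->] := bigmax_att (fun c => \max_(s <- permutations (undup c)) vdelta fset0 s) (bc_nonempty S).
have pn : permutations (undup c) != [::].
  by apply/negP => /eqP e; have := perm_refl (undup c); rewrite -mem_permutations e.
have [s sin ->] := bigmax_att (fun s => vdelta fset0 s) pn.
exists c, s; split => // x; move: sin; rewrite mem_permutations => /perm_mem ->.
by rewrite mem_undup.
Qed.

Local Close Scope fset_scope.

Theorem corollary5p5 (m : nat) (T : nat -> jtree) (G : nat -> graph) :
  0 < m ->
  (forall i, i < m -> jlabel (T i) = G i) ->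
  forall j, j < m ->
    Psi (T j) + vdelta (G j) [seq G i | i <- iota 0 m] <= Psi (bigjoin m T).
Proof.
case: m => [|n] // _ HG j hj.
have eG : [seq G i | i <- iota 0 n.+1] = [seq Lf T i | i <- iota 0 n.+1].
  apply/eq_in_map => i; rewrite mem_iota /Lf => /andP [_ hi]; by rewrite HG.
rewrite eG -(HG j hj) -/(Lf T j).
have [c [s [cin sc ->]]] := Psi_att (T j).
have [c' [s' [c'in s'c' <-]]] := Q hj cin sc.
exact: Psi_ge c'in s'c'.
Qed.
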